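(* Let $B\in\mathbb{R}^{n\times n}$ be a nonsingular $M$-matrix and $C\in\mathbb{R}^{n\times n}$ an $M$-matrix such that $B^{-1}C\ge 0$ (entrywise), and suppose that $B-C-I$ is a nonsingular $M$-matrix. Then $\rho(X)\neq 1$ for every entrywise nonpositive solution $X\in\mathbb{R}^{n\times n}$ of the quadratic matrix equation $X^2+BX+C=0$.
   Context: $\rho(\cdot)$ denotes spectral radius. Inequalities between matrices are entrywise; a matrix $X$ is nonpositive if $-X\ge 0$ entrywise. A $Z$-matrix is a real square matrix with nonpositive off-diagonal entries; a $Z$-matrix $A=sI-N$ with $N\ge 0$ is an $M$-matrix if $s\ge\rho(N)$ and a nonsingular $M$-matrix if $s>\rho(N)$. *)

(* Defs.v *)
From HB Require Import structures.
From mathcomp Require Import all_boot all_order all_algebra.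
From mathcomp Require Import complex.
From mathcomp Require Import reals.
Set Implicit Arguments. Unset Strict Implicit. Unset Printing Implicit Defensive.
Import Order.TTheory GRing.Theory Num.Theory.
Local Open Scope ring_scope.

(* Spectral radius of a real square matrix A (R a real closed field, e.g. the reals):
   the characteristic polynomial of A, viewed over the algebraically closed
   field R[i], splits as  lead_coef * \prod_(z <- eig) ('X - z);
   rho(A) = max_{z in eig} |z|  (0 when n = 0). *)
Definition eigenvalues_C (R : rcfType) (n : nat) (A : 'M[R]_n) : seq R[i] :=
  sval (closed_field_poly_normal (char_poly (map_mx (fun x : R => x%:C%C) A))).

Definition spectral_radius (R : rcfType) (n : nat) (A : 'M[R]_n) : R :=
  complex.Re (\big[Num.max/0]_(z <- eigenvalues_C A) `|z|).

Definition nonneg_mx (R : realDomainType) (m n : nat) (A : 'M[R]_(m, n)) : Prop :=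
  forall i j, 0 <= A i j.

Definition Z_matrix (R : realDomainType) (n : nat) (A : 'M[R]_n) : Prop :=
  forall i j, i != j -> A i j <= 0.

Definition M_matrix (R : rcfType) (n : nat) (A : 'M[R]_n) : Prop :=
  Z_matrix A /\
  exists (s : R) (N : 'M[R]_n),
    nonneg_mx N /\ A = s%:M - N /\ spectral_radius N <= s.

Definition nonsingular_M_matrix (R : rcfType) (n : nat) (A : 'M[R]_n) : Prop :=
  Z_matrix A /\
  exists (s : R) (N : 'M[R]_n),
    nonneg_mx N /\ A = s%:M - N /\ spectral_radius N < s.

(* Main.v *)
Require Import Defs.
From HB Require Import structures.
From mathcomp Require Import all_boot all_order all_algebra.
From mathcomp Require Import complex.
From mathcomp Require Import reals.
From mathcomp Require Import polyrcf ring.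
Import Order.TTheory GRing.Theory Num.Theory.
Local Open Scope ring_scope.

Section P.
Set Implicit Arguments. Unset Strict Implicit.
Variable R : rcfType.

Lemma monic_root_ge (p : {poly R}) x : p \is monic -> p.[x] <= 0 ->
  exists y, x <= y /\ root p y.
Proof.
move=> pm px.
have lc : lead_coef p > 0 by rewrite (monicP pm) ltr01.
have [z Hz] := poly_pinfty_gt_lc lc.
have hb : x <= Num.max x z by rewrite le_max lexx.
have hpb : 0 <= p.[Num.max x z].
  by apply: le_trans (ltW lc) (Hz _ _); rewrite le_max lexx orbT.
have [|y hy ry] := @poly_ivt _ p _ _ hb; first by rewrite px hpb.
  by exists y; split=> //; move: hy => /andP[].
Qed.

Lemma poly_le0_right (q : {poly R}) s0 :
  (forall s, s0 < s -> q.[s] <= 0) -> q.[s0] <= 0.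
Proof.
move=> H; rewrite leNgt; apply/negP => qp.
have [d d0 Hd] := poly_cont s0 q qp.
have hs : s0 < s0 + d / 2%:R by rewrite ltrDl divr_gt0.
have hd : `|s0 + d / 2%:R - s0| < d.
  rewrite addrC addKr ger0_norm ?divr_ge0 ?ler0n ?ltW //.
  by rewrite ltr_pdivrMr ?ltr0n // ltr_pMr // ltr1n.
have := Hd _ hd; have := H _ hs.
move: (q.[_]) => a ha; rewrite ltr_norml => /andP[h1 _].
by move: h1; rewrite ltrBrDl subrr ltNge ha.
Qed.
Lemma max_root (p : {poly R}) s1 : p != 0 -> root p s1 ->
  exists s0, [/\ s1 <= s0, root p s0 & forall s, s0 < s -> ~~ root p s].
Proof.
move=> p0 r1.
have Hr := roots_on_rootsR p0.
have Hl : forall x, x \in rootsR p -> root p x.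
  by move=> x; rewrite -Hr => /andP[].
have : forall l : seq R, (forall x, x \in l -> root p x) ->
  [/\ s1 <= \big[Num.max/s1]_(x <- l) x, root p (\big[Num.max/s1]_(x <- l) x)
   & forall x, x \in l -> x <= \big[Num.max/s1]_(x <- l) x].
  elim=> [|a l IH] Hl'; first by rewrite big_nil lexx r1.
  have [h1 h2 h3] := IH (fun x hx => Hl' x (mem_behead (s:=a::l) hx)).
  rewrite big_cons; split.
  - by rewrite le_max h1 orbT.
  - by case: (leP a (\big[Num.max/s1]_(x <- l) x)) => _ //; apply: Hl'; rewrite inE eqxx.
  - move=> x; rewrite inE => /orP[/eqP->|hx]; first by rewrite le_max lexx.
    by rewrite le_max h3 ?orbT.
move=> /(_ _ Hl) [h1 h2 h3]; exists (\big[Num.max/s1]_(x <- rootsR p) x); split=> // s hs.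
apply/negP => rs.
have : s \in rootsR p by rewrite -Hr rs andbT.
by move/h3; rewrite leNgt hs.
Qed.
Lemma horner_char n (A : 'M[R]_n) a : (char_poly A).[a] = \det (a%:M - A).
Proof.
rewrite horner_sum; apply: eq_bigr => s _.
rewrite hornerM horner_exp !hornerE; congr (_ * _).
rewrite (big_morph _ (fun p q => hornerM p q a) (hornerC 1 a)).
by apply: eq_bigr => i _; rewrite !mxE !(hornerE, hornerMn).
Qed.

Lemma det_schur n (al : R) (b : 'rV[R]_n) (c : 'cV[R]_n) (D : 'M[R]_n) :
  D \in unitmx ->
  \det (block_mx (al%:M : 'M_1) b c D) = \det D * (al - (b *m invmx D *m c) 0 0).
Proof.
move=> uD.
have -> : block_mx (al%:M : 'M_1) b c D =
  block_mx 1%:M (b *m invmx D) 0 1%:M *m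
  block_mx (al - (b *m invmx D *m c) 0 0)%:M 0 c D.
  rewrite mulmx_block !mul1mx !mul0mx ?mulmx0 !add0r ?addr0 mulmxKV //.
  by congr block_mx; rewrite [X in _ = _ + X]mx11_scalar -raddfD /= subrK.
rewrite det_mulmx det_ublock det_lblock !det1 det_scalar1.
by rewrite !mul1r mulrC.
Qed.
Definition mono n (A : 'M[R]_n) :=
  forall x : 'cV[R]_n, (forall i, 0 <= (A *m x) i 0) -> forall i, 0 <= x i 0.

Definition nonroot_from n (N : 'M[R]_n) t :=
  forall s, t <= s -> ~~ root (char_poly N) s.

Lemma det_pos n (N : 'M[R]_n) t : nonroot_from N t -> 0 < \det (t%:M - N).
Proof.
move=> H; rewrite ltNge; apply/negP => h.
have := monic_root_ge (x:=t) (char_poly_monic N); rewrite horner_char => /(_ h) [y [hy ry]].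
by move: (H y hy); rewrite ry.
Qed.

Lemma mono_ge0 n (A : 'M[R]_n) (c : 'cV_n) : mono A -> A \in unitmx ->
  (forall i, 0 <= c i 0) -> forall i, 0 <= (invmx A *m c) i 0.
Proof. by move=> mA uA hc; apply: mA => i; rewrite mulKVmx. Qed.

Lemma block_sub n (a s : R) (b : 'rV[R]_n) (c : 'cV[R]_n) (N' : 'M[R]_n) :
  s%:M - block_mx a%:M b c N' = block_mx (s - a)%:M (- b) (- c) (s%:M - N') :> 'M_(1 + n).
Proof.
by rewrite (scalar_mx_block 1 n) opp_block_mx add_block_mx !sub0r -raddfB.
Qed.
Lemma step n (a : R) (b : 'rV[R]_n) (c : 'cV[R]_n) (N' : 'M[R]_n) t :
  (forall (M : 'M[R]_n) t, (forall i j, 0 <= M i j) -> nonroot_from M t -> mono (t%:M - M)) ->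
  (forall j, 0 <= b 0 j) -> (forall i, 0 <= c i 0) -> (forall i j, 0 <= N' i j) ->
  nonroot_from (block_mx (a%:M : 'M_1) b c N') t ->
  mono (t%:M - block_mx (a%:M : 'M_1) b c N').
Proof.
move=> IH hb hc hN' Hr.
set N := block_mx _ _ _ _.
have Hu : forall s, nonroot_from N' s -> s%:M - N' \in unitmx.
  by move=> s hs; rewrite unitmxE unitfE lt0r_neq0 // det_pos.
have Hbeta : forall s, nonroot_from N' s -> 0 <= (b *m invmx (s%:M - N') *m c) 0 0.
  move=> s hs; have := mono_ge0 (IH _ _ hN' hs) (Hu _ hs) hc.
  rewrite -mulmxA mxE => h; apply: sumr_ge0 => j _; exact: mulr_ge0.
have Hdet : forall s, nonroot_from N' s -> \det (s%:M - N) =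
   \det (s%:M - N') * (s - a - (b *m invmx (s%:M - N') *m c) 0 0).
  by move=> s hs; rewrite /N block_sub det_schur ?Hu // mulmxN mulNmx mulNmx opprK.
have HN' : nonroot_from N' t.
  move=> s hs; apply/negP => rs.
  have [s0 [hs0 rs0 Hs0]] := max_root (monic_neq0 (char_poly_monic N')) rs.
  have Hq : forall s', s0 < s' -> (char_poly N - ('X - a%:P) * char_poly N').[s'] <= 0.
    move=> s' hs'.
    have hn : nonroot_from N' s' by move=> u hu; apply: Hs0; exact: lt_le_trans hs' hu.
    rewrite hornerD hornerN hornerM !horner_char Hdet // hornerXsubC.
    have h1 := det_pos hn; have h2 := Hbeta _ hn.
    move: h1 h2; set d := \det _; set be := (_ 0 0) => h1 h2.
    suff -> : d * (s' - a - be) - (s' - a) * d = - (d * be) by rewrite oppr_le0 mulr_ge0 // ltW.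
    ring.
  have := poly_le0_right Hq.
  rewrite hornerD hornerN hornerM !horner_char hornerXsubC.
  have -> : \det (s0%:M - N') = 0 by rewrite -horner_char; apply/rootP.
  rewrite mulr0 subr0 => h.
  have := monic_root_ge (x:=s0) (char_poly_monic N); rewrite horner_char => /(_ h) [y [hy ry]].
  by move: (Hr y (le_trans hs (le_trans hs0 hy))); rewrite ry.
have mD := IH _ _ hN' HN'.
have uD := Hu _ HN'.
have dN := det_pos Hr.
rewrite Hdet // pmulr_rgt0 ?det_pos // in dN.
move: dN mD uD; set D := t%:M - N'; set be := (_ 0 0) => sig mD uD.
move=> x hx.
rewrite -[x]vsubmxK in hx *.
rewrite /N block_sub mul_block_col in hx.
set x0 := usubmx x in hx *; set x' := dsubmx x in hx *.
set y0 := (t - a)%:M *m x0 + - b *m x' in hx.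
set y' := - c *m x0 + D *m x' in hx.
have hy0 : 0 <= y0 0 0 by have := hx (lshift n 0); rewrite col_mxEu.
have hy' : forall i, 0 <= y' i 0 by move=> i; have := hx (rshift 1 i); rewrite col_mxEd.
have ex' : D *m x' = y' + c *m x0 by rewrite /y' mulNmx addrC addNKr.
have key : y0 + b *m (invmx D *m y') = (t - a - be)%:M *m x0.
  rewrite /y0 /y' !mulmxDr mulKmx // !mulNmx !mulmxN.
  rewrite [- _ + _]addrC addrA subrK !mulmxA [X in _ - X *m x0]mx11_scalar -/be.
  by rewrite -mulmxBl -raddfB.
have hx0 : 0 <= x0 0 0.
  have := f_equal (fun M : 'M_1 => M 0 0) key => /=.
  rewrite mul_scalar_mx [in X in _ = X]mxE => h; rewrite -(pmulr_rge0 _ sig) -h.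
  rewrite [X in _ <= X]mxE; apply: addr_ge0 => //; rewrite mxE; apply: sumr_ge0 => j _.
  by apply: mulr_ge0 => //; apply: mono_ge0.
have hx' : forall i, 0 <= x' i 0.
  apply: mD => i; rewrite ex' mxE; apply: addr_ge0 => //.
  by rewrite mxE big_ord1 mulr_ge0.
move=> i; rewrite -(splitK i); case: (split i) => j /=.
  by rewrite col_mxEu ord1.
by rewrite col_mxEd.
Qed.
Lemma mono_all n (N : 'M[R]_n) t :
  (forall i j, 0 <= N i j) -> nonroot_from N t -> mono (t%:M - N).
Proof.
elim: n N t => [|n IH] N t hN Hr; first by move=> x _ i; case: i.
have E : N = block_mx ((ulsubmx (N : 'M_(1 + n))) 0 0)%:M (ursubmx (N : 'M_(1 + n)))
   (dlsubmx (N : 'M_(1 + n))) (drsubmx (N : 'M_(1 + n)))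
  by rewrite -mx11_scalar submxK.
rewrite E in Hr *; apply: step => //.
- by move=> j; rewrite !mxE; exact: hN.
- by move=> i; rewrite !mxE; exact: hN.
- by move=> i j; rewrite !mxE; exact: hN.
Qed.
Lemma pf_col n (N : 'M[R]_n) (u : 'cV[R]_n) :
  (forall i j, 0 <= N i j) -> (forall i, 0 <= u i 0) -> u != 0 ->
  (forall i, u i 0 <= (N *m u) i 0) ->
  exists mu, 1 <= mu /\ root (char_poly N) mu.
Proof.
move=> hN hu u0 hNu.
have Hr := roots_on_rootsR (monic_neq0 (char_poly_monic N)).
case: (boolP (has (fun x => 1 <= x) (rootsR (char_poly N)))) => [/hasP [mu hin h1]|hn].
  by exists mu; split=> //; move: hin; rewrite -Hr => /andP[].
have Hn : nonroot_from N 1.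
  move=> s hs; apply/negP => rs; move/hasP: hn; apply.
  by exists s => //; rewrite -Hr rs.
have := mono_all hN Hn (x := - u).
have hx : forall i, 0 <= ((1%:M - N) *m - u) i 0.
  move=> i; rewrite mulmxN mulmxBl mul1mx opprB [X in _ <= X]mxE [X in _ <= _ + X]mxE subr_ge0.
  exact: hNu.
move=> /(_ hx) h; exfalso; move/eqP: u0; apply; apply/matrixP => i j.
rewrite ord1 mxE; apply/eqP; rewrite eq_le hu andbT.
by have := h i; rewrite mxE oppr_ge0.
Qed.
End P.
Section C.
Set Implicit Arguments. Unset Strict Implicit.
Variable R : rcfType.

Lemma normC_re (z : R[i]) : `|z| = (complex.Re `|z|)%:C%C.
Proof. by rewrite normc_def. Qed.

Lemma re_norm_real (a : R) : complex.Re `|a%:C%C| = `|a|.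
Proof. by rewrite normc_def /= expr0n addr0 sqrtr_sqr. Qed.

Lemma specE n (A : 'M[R]_n) :
  spectral_radius A = \big[Num.max/0]_(z <- eigenvalues_C A) complex.Re `|z|.
Proof.
rewrite /spectral_radius.
suff -> : forall s : seq R[i], \big[Num.max/0]_(z <- s) `|z| =
   (\big[Num.max/0]_(z <- s) complex.Re `|z|)%:C%C by [].
elim=> [|z s IH]; first by rewrite !big_nil.
rewrite !big_cons IH [`|z|]normC_re !maxElt ltcR.
by case: ifP.
Qed.

Lemma eig_root n (A : 'M[R]_n) z :
  (z \in eigenvalues_C A) = root (char_poly (map_mx (fun x : R => x%:C%C) A)) z.
Proof.
rewrite /eigenvalues_C; case: closed_field_poly_normal => r /= Hr.
rewrite [in RHS]Hr rootZ ?root_prod_XsubC //.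
by rewrite (monicP (char_poly_monic _)) oner_neq0.
Qed.

Lemma real_root_le n (A : 'M[R]_n) a :
  root (char_poly A) a -> `|a| <= spectral_radius A.
Proof.
move=> ra.
have hin : a%:C%C \in eigenvalues_C A.
  rewrite eig_root.
  have -> : map_mx (fun x : R => x%:C%C) A = map_mx (real_complex R) A by [].
  by rewrite -map_char_poly fmorph_root.
rewrite specE -re_norm_real.
exact: (@le_bigmax_seq _ _ _ _ 0 _ xpredT (fun z => complex.Re `|z|) hin).
Qed.

Lemma bigmax_cases (s : seq R[i]) (F : R[i] -> R) :
  \big[Num.max/0]_(z <- s) F z = 0 \/ exists2 z, z \in s & \big[Num.max/0]_(z <- s) F z = F z.
Proof.
elim: s => [|a s IH]; first by left; rewrite big_nil.
rewrite big_cons maxElt; case: ifP => _.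
  case: IH => [->|[z zs ->]]; first by left.
  by right; exists z => //; rewrite inE zs orbT.
by right; exists a => //; rewrite inE eqxx.
Qed.

Lemma rho1 n (A : 'M[R]_n) : spectral_radius A = 1 ->
  exists2 z, z \in eigenvalues_C A & complex.Re `|z| = 1.
Proof.
rewrite specE => h.
case: (bigmax_cases (eigenvalues_C A) (fun z => complex.Re `|z|)) => [|[z zs hz]].
  by rewrite h => /eqP; rewrite oner_eq0.
by exists z => //; rewrite -hz.
Qed.
End C.

Theorem lemma3p2 (R : realType) (n : nat) (B C : 'M[R]_n) :
  nonsingular_M_matrix B ->
  M_matrix C ->
  nonneg_mx (invmx B *m C) ->
  nonsingular_M_matrix (B - C - 1%:M) ->
  forall X : 'M[R]_n,
    (forall i j, X i j <= 0) ->
    X *m X + B *m X + C = 0 ->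
    spectral_radius X != 1.
Proof.
move=> _ _ _ [_ [s [M [hM [hBC hs]]]]] X hX hEq.
apply/eqP => h1.
have [z zin hz] := rho1 h1.
rewrite eig_root -eigenvalue_root_char in zin.
have [v hv v0] := eigenvalueP zin.
pose u : 'cV[R]_n := \col_i complex.Re `|v 0 i|.
pose N := - X.
have hN : forall i j, 0 <= N^T i j by move=> i j; rewrite !mxE oppr_ge0.
have hu : forall i, 0 <= u i 0.
  by move=> i; rewrite mxE normc_def /= sqrtr_ge0.
have u0 : u != 0.
  apply: contraNneq v0 => hu0; apply/eqP/matrixP => i j.
  rewrite ord1 !mxE; apply/eqP; rewrite -normr_eq0 normC_re.
  by have := congr1 (fun m : 'cV[R]_n => m j 0) hu0; rewrite !mxE => ->.
have hNu : forall i, u i 0 <= (N^T *m u) i 0.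
  move=> j; rewrite -lecR.
  have -> : (u j 0)%:C%C = `|(v *m map_mx (fun x : R => x%:C%C) X) 0 j|.
    rewrite hv [(z *: v) 0 j]mxE normrM [`|z|]normC_re hz rmorph1 mul1r.
    by rewrite [u j 0]mxE -normC_re.
  rewrite [X in `|X|]mxE; apply: le_trans (ler_norm_sum _ _ _) _.
  rewrite mxE rmorph_sum; apply: ler_sum => i _.
  rewrite normrM !mxE rmorphM [`|(X i j)%:C%C|]normC_re re_norm_real (ler0_norm (hX i j)).
  by rewrite [`|v 0 i|]normC_re mulrC.
have [mu [hmu rmu]] := pf_col hN hu u0 hNu.
have d1 : \det (mu%:M - N) = 0.
  move/rootP: rmu; rewrite horner_char -det_tr.
  by have -> : (mu%:M - N^T)^T = mu%:M - N by rewrite linearB /= tr_scalar_mx trmxK.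
have r2 : root (char_poly X) (- mu).
  apply/rootP; rewrite horner_char.
  have -> : (- mu)%:M - X = - (mu%:M - N) by rewrite /N opprB raddfN addrC.
  by rewrite -scaleN1r detZ d1 mulr0.
have := real_root_le r2; rewrite h1 normrN ger0_norm ?(le_trans ler01 hmu) // => hmu'.
have mu1 : mu = 1 by apply/eqP; rewrite eq_le hmu' hmu.
rewrite mu1 in r2.
have /det0P [w w0 hw] : \det (((- 1)%:M - X)^T) == 0.
  by rewrite det_tr -horner_char; exact: r2.
have := congr1 trmx hw; rewrite trmx_mul trmxK trmx0 => hw'.
have hXv : X *m w^T = - w^T.
  move: hw'; rewrite mulmxBl mul_scalar_mx scaleN1r => /eqP; rewrite subr_eq0 => /eqP.
  by move=> ->.
have := congr1 (mulmx^~ w^T) hEq; rewrite /= mul0mx !mulmxDl -!mulmxA hXv !mulmxN hXv opprK => e.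
have hM0 : (s%:M - M) *m w^T = 0.
  rewrite -hBC !mulmxBl mul1mx.
  move/eqP: e; rewrite addrAC subr_eq0 => /eqP <-.
  by rewrite addrK subrr.
have rs : root (char_poly M) s.
  apply/rootP; rewrite horner_char -det_tr; apply/eqP/det0P; exists w => //.
  by rewrite -[w]trmxK -trmx_mul hM0 trmx0.
have := le_lt_trans (real_root_le rs) hs.
by rewrite ltNge ler_norm.
Qed.
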